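(* Let $\lambda$ be a partition of $n$, and let $\mathcal{G}_{rf}(\lambda)$ be the set of polynomials obtained by reading the regular filling of $\lambda$, i.e. $\mathcal{G}_{rf}(\lambda)$ is the union, over all columns $c=0,1,\dots,\lambda_1-1$ of the Young diagram of $\lambda$ and over all entries $r$ appearing in column $c$ of the regular filling, of the sets $e_r(n-c)$ (note $n-c$ is the entry of the bottom cell of column $c$). Then the De Concini–Procesi ideal satisfies $\mathcal{I}_\lambda=(\mathcal{G}_{rf}(\lambda))$.
   Context: $k$ is a field of characteristic $0$ and $R=k[x_1,\dots,x_n]$. For a set $S$ of variables, $e_r(S)$ is the $r$-th elementary symmetric polynomial in the variables of $S$ ($e_0=1$, and $e_r(S)=0$ if $r>|S|$). For $1\le m\le n$, $e_r(m)$ denotes the set $\{e_r(S): S\subseteq\{x_1,\dots,x_n\},\ |S|=m\}$. A partition $\lambda=(\lambda_1\ge\lambda_2\ge\cdots)$ of $n$ has conjugate $\lambda'$ with $\lambda'_i=\#\{j:\lambda_j\ge i\}$ (so $\lambda'_i=0$ for $i>\lambda_1$). The Young diagram of $\lambda$ is drawn with rows counted from the bottom: the bottom row has $\lambda_1$ cells, the next $\lambda_2$, etc., left-justified; columns are numbered $0,1,\dots,\lambda_1-1$ from left to right, and column $c$ has height $\lambda'_{c+1}$. For $1\le m\le n$ put $\delta_m(\lambda)=\lambda'_n+\lambda'_{n-1}+\cdots+\lambda'_{n-m+1}$. The De Concini–Procesi ideal $\mathcal{I}_\lambda\subseteq R$ is the ideal generated by all elements of the sets $e_r(m)$ with $1\le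 m\le n$ and $m\ge r>m-\delta_m(\lambda)$ (Tanisaki's generating set). The regular filling of $\lambda$ places the numbers $1,\dots,n$ in the cells as follows: for each column $c$, the bottom cell of column $c$ receives $n-c$, and the remaining $\lambda'_{c+1}-1$ cells of column $c$ receive, from top to bottom, the consecutive integers $1+\sum_{d<c}(\lambda'_{d+1}-1),\dots,\sum_{d\le c}(\lambda'_{d+1}-1)$ (i.e. the non-bottom cells are filled with $1,2,\dots$ column by column from left to right, top to bottom within each column, and the bottom row is filled last, from right to left). *)

(* Defs.v *)
From HB Require Import structures.
From mathcomp Require Import all_boot all_order all_algebra.
From mathcomp Require Import mpoly.
Unset Printing Implicit Defensive.
Import GRing.Theory.
Local Open Scope ring_scope.

(* Variables x_1..x_n are 'X_i for i : 'I_n (x_{i+1} = 'X_i). *)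

Definition esymS (k : fieldType) (n : nat) (S : {set 'I_n}) (r : nat)
  : {mpoly k[n]} :=
  \sum_(T : {set 'I_n} | (T \subset S) && (#|T| == r)) \prod_(i in T) 'X_i.

Definition in_esym_m (k : fieldType) (n r m : nat) (p : {mpoly k[n]}) : Prop :=
  exists S : {set 'I_n}, #|S| = m /\ p = @esymS k n S r.

Definition ideal_gen (k : fieldType) (n : nat) (P : {mpoly k[n]} -> Prop)
  (p : {mpoly k[n]}) : Prop :=
  exists l : seq ({mpoly k[n]} * {mpoly k[n]}),
    (forall q, q \in l -> P q.2) /\ p = \sum_(q <- l) q.1 * q.2.

Definition is_partition (n : nat) (la : seq nat) : Prop :=
  [/\ sorted geq la, all (fun x => 0 < x)%N la & sumn la = n].

(* conjugate: la'_i = #{ j : la_j >= i } (1-indexed i) *)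
Definition conj_part (la : seq nat) (i : nat) : nat :=
  count (fun x => i <= x)%N la.

Definition delta (n : nat) (la : seq nat) (m : nat) : nat :=
  (\sum_(n - m + 1 <= i < n + 1) conj_part la i)%N.

Definition tanisaki_gen (k : fieldType) (n : nat) (la : seq nat)
  (p : {mpoly k[n]}) : Prop :=
  exists m r : nat, [/\ (1 <= m <= n)%N, (r <= m)%N,
     (m < r + delta n la m)%N  (* i.e. r > m - delta_m *)
     & @in_esym_m k n r m p].

Definition DP_ideal (k : fieldType) (n : nat) (la : seq nat) :=
  @ideal_gen k n (tanisaki_gen k n la).

(* entries of column c (0-indexed) in the regular filling of la *)
Definition rf_offset (la : seq nat) (c : nat) : nat :=
  (\sum_(d < c) (conj_part la d.+1 - 1))%N.

Definition rf_column_entry (n : nat) (la : seq nat) (c r : nat) : bool :=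
  (r == (n - c)%N) ||
  ((rf_offset la c < r) && (r <= rf_offset la c + (conj_part la c.+1 - 1)))%N.

Definition Grf (k : fieldType) (n : nat) (la : seq nat)
  (p : {mpoly k[n]}) : Prop :=
  exists c r : nat, [/\ (c < head 0%N la)%N, rf_column_entry n la c r
     & @in_esym_m k n r (n - c)%N p].

(* Main.v *)
Require Import Defs.
From HB Require Import structures.
From mathcomp Require Import all_boot all_order all_algebra.
From mathcomp Require Import mpoly.
From mathcomp Require Import zify.

Lemma sum_lt (N x : nat) : (\sum_(i < N) (i < x : nat))%N = minn N x.
Proof.
elim: N => [|N IH]; first by rewrite big_ord0 min0n.
rewrite big_ord_recr /= IH.
case: (ltnP N x) => h /=; lia.
Qed.

Lemma sum_conj (la : seq nat) (N : nat) : all (fun x => x <= N)%N la ->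
  (\sum_(i < N) conj_part la i.+1)%N = sumn la.
Proof.
elim: la => [|x l IH] /=.
  by move=> _; rewrite big1.
case/andP=> hx hl.
rewrite /conj_part /=.
rewrite big_split /= -IH //.
congr (_ + _)%N.
rewrite (eq_bigr (fun i : 'I_N => (i < x : nat))) //.
rewrite sum_lt; lia.
Qed.

Section Arith.
Variables (n : nat) (la : seq nat).
Hypothesis hp : is_partition n la.
Let lam1 := head 0%N la.

Lemma all_le_head : all (fun x => x <= lam1)%N la.
Proof.
case: hp => hs _ _; rewrite /lam1.
case: la hs => //= h t hs; rewrite leqnn /=.
have tr : transitive geq by move=> a b c h1 h2; apply: leq_trans h2 h1.
have := order_path_min tr hs.
by apply: sub_all => y.
Qed.

Lemma lam1_le_n : (lam1 <= n)%N.
Proof.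
case: hp => _ _ <-; rewrite /lam1; case: la => //= h t; exact: leq_addr.
Qed.

Lemma conj_pos c : (c < lam1)%N -> (0 < conj_part la c.+1)%N.
Proof.
rewrite /lam1 /conj_part; case: la => //= h t hc.
by rewrite hc.
Qed.

Lemma conj_zero i : (lam1 < i)%N -> conj_part la i = 0%N.
Proof.
move=> hi; rewrite /conj_part; apply/eqP; rewrite -leqn0 leqNgt -has_count.
apply/hasP => -[x /(allP all_le_head) hx /= hix]; lia.
Qed.

Lemma off_S c : rf_offset la c.+1 = (rf_offset la c + (conj_part la c.+1 - 1))%N.
Proof. by rewrite /rf_offset big_ord_recr. Qed.

Lemma off_eq c : (c <= lam1)%N ->
  (rf_offset la c + c = \sum_(d < c) conj_part la d.+1)%N.
Proof.
elim: c => [|c IH] hc; first by rewrite /rf_offset !big_ord0.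
rewrite off_S big_ord_recr /= -IH; last lia.
have := conj_pos c hc. lia.
Qed.


Lemma key c : (c <= lam1)%N -> (rf_offset la c + delta n la (n - c) = n - c)%N.
Proof.
move=> hc.
have hcn : (c <= n)%N by apply: leq_trans hc lam1_le_n.
have E := off_eq c hc.
have : (rf_offset la c + c + delta n la (n - c) = n)%N.
  rewrite E /delta.
  have -> : (n - (n - c) + 1 = c + 1)%N by lia.
  rewrite big_addn addnK.
  under eq_bigr do rewrite addn1.
  rewrite -(big_mkord xpredT (fun d => conj_part la d.+1)).
  rewrite -big_cat_nat //.
  rewrite big_mkord sum_conj.
    by case: hp.
  by apply: sub_all all_le_head => x /= h; apply: leq_trans h lam1_le_n.
lia.
Qed.

Lemma delta_zero c : (lam1 <= c)%N -> (c <= n)%N -> delta n la (n - c) = 0%N.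
Proof.
move=> h1 h2; rewrite /delta big1_seq // => i /andP[_]; rewrite mem_iota => /andP[hi _].
apply: conj_zero; lia.
Qed.

End Arith.
Arguments all_le_head {n la}.
Arguments lam1_le_n {n la}.
Arguments conj_zero {n la}.
Arguments key {n la}.
Arguments delta_zero {n la}.
Arguments conj_pos {la c}.
Import GRing.Theory.
Local Open Scope ring_scope.

Section Ideal.
Variables (k : fieldType) (n : nat).
Implicit Types (P Q : {mpoly k[n]} -> Prop).
Local Notation IG := (@ideal_gen k n).

Lemma ideal0 P : IG P 0.
Proof. by exists [::]; rewrite big_nil. Qed.

Lemma idealD P p q : IG P p -> IG P q -> IG P (p + q).
Proof.
move=> [l1 [h1 ->]] [l2 [h2 ->]]; exists (l1 ++ l2); split; last by rewrite big_cat.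
by move=> x; rewrite mem_cat => /orP[/h1|/h2].
Qed.

Lemma idealM P a p : IG P p -> IG P (a * p).
Proof.
move=> [l [h ->]]; exists (map (fun q => (a * q.1, q.2)) l); split.
  by move=> q /mapP[q' /h hq' ->].
by rewrite big_map mulr_sumr; apply: eq_bigr => q _; rewrite mulrA.
Qed.

Lemma idealZ P (a : k) p : IG P p -> IG P (a *: p).
Proof.
move=> [l [h ->]]; exists (map (fun q => (a *: q.1, q.2)) l); split.
  by move=> q /mapP[q' /h hq' ->].
by rewrite big_map scaler_sumr; apply: eq_bigr => q _; rewrite scalerAl.
Qed.

Lemma idealB P p : P p -> IG P p.
Proof. by move=> h; exists [:: (1, p)]; split; [move=> q; rewrite inE => /eqP -> | rewrite big_seq1 mul1r]. Qed.

Lemma idealS P (I : finType) (A : pred I) F :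
  (forall i, A i -> IG P (F i)) -> IG P (\sum_(i | A i) F i).
Proof.
move=> h; apply: (big_ind (IG P)); [exact: ideal0 | exact: idealD | exact: h].
Qed.

Lemma ideal_mono P Q p : (forall q, P q -> IG Q q) -> IG P p -> IG Q p.
Proof.
move=> hPQ [l [h ->]]; rewrite big_seq; apply: (big_ind (IG Q)); first exact: ideal0.
  exact: idealD.
by move=> q hq; apply: idealM; apply: hPQ; apply: h.
Qed.

Lemma esym_sum (S : {set 'I_n}) (r : nat) :
  \sum_(x in S) @esymS k n (S :\ x) r = @esymS k n S r *+ (#|S| - r).
Proof.
rewrite /esymS -sumrMnl.
transitivity (\sum_(x in S) \sum_(T : {set 'I_n} | (T \subset S) && (#|T| == r))
     (if x \notin T then \prod_(i in T) 'X_i else 0 : {mpoly k[n]})).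
  apply: eq_bigr => x _; rewrite -big_mkcondr; apply: eq_bigl => T.
  by rewrite subsetD1 andbAC.
rewrite exchange_big /=; apply: eq_bigr => T /andP[hTS /eqP hr].
rewrite -big_mkcondr /=.
rewrite (eq_bigl (fun x => x \in S :\: T)); last by move=> x; rewrite in_setD andbC.
by rewrite sumr_const cardsD (setIidPr hTS) hr.
Qed.

End Ideal.

From mathcomp Require Import zify.

Section Main.
Variables (k : fieldType) (n : nat) (la : seq nat).
Hypothesis hch : [pchar k]%R =i pred0.
Hypothesis hp : is_partition n la.
Local Notation I := (@ideal_gen k n (@Grf k n la)).
Local Notation lam1 := (head 0%N la).

Lemma colP (j : nat) : forall c, (lam1 - c = j)%N -> (c <= lam1)%N ->
  forall (S : {set 'I_n}) r, #|S| = (n - c)%N ->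
  (rf_offset la c < r <= n - c)%N -> I (@esymS k n S r).
Proof.
elim: j => [|j IH] c hj hc S r hS /andP[h1 h2].
  have ec : c = lam1 by lia.
  have := key hp _ hc; rewrite delta_zero;
    [ | exact: hp | lia | have := lam1_le_n hp; lia].
  by move=> hk; exfalso; lia.
have hcl : (c < lam1)%N by lia.
have hcp := conj_pos hcl.
case: (boolP ((r <= rf_offset la c + (conj_part la c.+1 - 1))%N || (r == n - c)%N)) => hr.
  apply: idealB; exists c, r; split => //.
    rewrite /rf_column_entry h1 /=; case/orP: hr => ->; by rewrite ?orbT.
  by exists S.
have hr1 : (rf_offset la c.+1 < r)%N by rewrite off_S; lia.
have hr2 : (r < n - c)%N by lia.
have hne : ((n - c - r)%:R : k) != 0.
  by move/pcharf0P: hch => ->; lia.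
have -> : @esymS k n S r = ((n - c - r)%:R)^-1 *: \sum_(x in S) @esymS k n (S :\ x) r.
  by rewrite esym_sum hS -scaler_nat scalerA mulVf // scale1r.
apply: idealZ; apply: idealS => x hx.
apply: (IH c.+1); [lia | lia | | lia].
by move: hS; rewrite (cardsD1 x S) hx /=; lia.
Qed.

Lemma DP_sub p : @DP_ideal k n la p -> I p.
Proof.
apply: ideal_mono => q [m [r [/andP[hm1 hm2] hrm hlt [S [hS ->]]]]].
have em : m = (n - (n - m))%N by lia.
case: (ltnP (n - m) lam1) => hc.
  have := key hp _ (ltnW hc); rewrite -em => hk.
  apply: (@colP _ (n - m) (erefl _) (ltnW hc) S r); lia.
have := delta_zero hp _ hc (leq_subr _ _); rewrite -em => hd.
lia.
Qed.

Lemma Grf_sub p : I p -> @DP_ideal k n la p.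
Proof.
apply: ideal_mono => q [c [r [hc hent [S [hS ->]]]]].
apply: idealB; exists (n - c)%N, r.
have hl := lam1_le_n hp.
have k1 := key hp _ (ltnW hc).
have k2 := key hp _ hc.
have hcp := conj_pos hc.
have o := off_S la c.
move: hent; rewrite /rf_column_entry => /orP[/eqP hr|/andP[ha hb]].
  split; [lia | lia | | by exists S].
  lia.
split; [lia | | | by exists S].
  lia.
lia.
Qed.

End Main.

Theorem mainTheorem3 (k : fieldType) (n : nat) (la : seq nat) :
  [pchar k]%R =i pred0 ->
  is_partition n la ->
  forall p : {mpoly k[n]}, @DP_ideal k n la p <-> @ideal_gen k n (@Grf k n la) p.
Proof.
move=> hch hp p; split; [exact: DP_sub | exact: Grf_sub].
Qed.
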